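(* Let $A,B,C$ be non-collinear points of the real affine plane. Let $A^{+},A^{-}$ be points on line $\overleftrightarrow{BC}$, $B^{+},B^{-}$ points on line $\overleftrightarrow{CA}$, and $C^{+},C^{-}$ points on line $\overleftrightarrow{AB}$, with $A^{+}\neq C$, $A^{-}\neq B$, $B^{+}\neq A$, $B^{-}\neq C$, $C^{+}\neq B$, $C^{-}\neq A$. Define $$a^{+}=\frac{|BA^{+}|}{|A^{+}C|},\quad b^{+}=\frac{|CB^{+}|}{|B^{+}A|},\quad c^{+}=\frac{|AC^{+}|}{|C^{+}B|},\quad a^{-}=\frac{|CA^{-}|}{|A^{-}B|},\quad b^{-}=\frac{|AB^{-}|}{|B^{-}C|},\quad c^{-}=\frac{|BC^{-}|}{|C^{-}A|}.$$ Let $\widehat{B^{-}C^{+}}$ be the intersection point of the lines $\overleftrightarrow{BB^{-}}$ and $\overleftrightarrow{CC^{+}}$, $\widehat{C^{-}A^{+}}$ the intersection of $\overleftrightarrow{CC^{-}}$ and $\overleftrightarrow{AA^{+}}$, and $\widehat{A^{-}B^{+}}$ the intersection of $\overleftrightarrow{AA^{-}}$ and $\overleftrightarrow{BB^{+}}$ (intersections taken in the projective plane, so a point may be at infinity when the two lines are parallel). Then these three points lie on a common (projective) line if and only if $$a^{+}b^{+}c^{+}+a^{-}b^{-}c^{-}=-1+a^{+}a^{-}+b^{+}b^{-}+c^{+}c^{-}.$$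
   Context: Segment lengths are signed: for points on one of the lines $\overleftrightarrow{AB}$, $\overleftrightarrow{BC}$, $\overleftrightarrow{CA}$, $|PQ|$ is positive when $\overrightarrow{PQ}$ points in the direction of $\overrightarrow{AB}$, $\overrightarrow{BC}$, $\overrightarrow{CA}$ respectively; with $|PP|/|PQ|=0$. Equivalently, e.g. $A^{+}=(B+a^{+}C)/(1+a^{+})$ and $A^{-}=(a^{-}B+C)/(1+a^{-})$ as vectors, and similarly for the other points. The hypotheses guarantee that each pair of lines whose intersection is taken is a pair of distinct lines. *)

(* Defs.v *)
From Stdlib Require Import Reals.
Open Scope R_scope.

Definition pt := (R * R)%type.
Definition px (P : pt) : R := fst P.
Definition py (P : pt) : R := snd P.

Definition vsub (P Q : pt) : pt := (px P - px Q, py P - py Q).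
Definition dot (u v : pt) : R := px u * px v + py u * py v.

Definition collinear (P Q S : pt) : Prop :=
  (px Q - px P) * (py S - py P) - (py Q - py P) * (px S - px P) = 0.

Definition on_line (X P Q : pt) : Prop :=
  exists t : R, X = (px P + t * (px Q - px P), py P + t * (py Q - py P)).

(* Signed length |PQ| measured along direction d (d = the direction vector
   of the line containing P, Q): positive iff PQ points along d. *)
Definition slen (d P Q : pt) : R := dot (vsub Q P) d / sqrt (dot d d).

Definition sratio (d P X Q : pt) : R := slen d P X / slen d X Q.

(* Real projective plane: homogeneous coordinates (nonzero triples). *)
Definition hpt := (R * R * R)%type.
Definition h1 (X : hpt) : R := fst (fst X).
Definition h2 (X : hpt) : R := snd (fst X).
Definition h3 (X : hpt) : R := snd X.
Definition hnonzero (X : hpt) : Prop := ~ (h1 X = 0 /\ h2 X = 0 /\ h3 X = 0).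

Definition lift (P : pt) : hpt := (px P, py P, 1).

Definition hon_line (X : hpt) (P Q : pt) : Prop :=
  exists s t : R,
    h1 X = s * h1 (lift P) + t * h1 (lift Q) /\
    h2 X = s * h2 (lift P) + t * h2 (lift Q) /\
    h3 X = s * h3 (lift P) + t * h3 (lift Q).

Definition hcollinear (X Y Z : hpt) : Prop :=
  exists a b c : R, ~ (a = 0 /\ b = 0 /\ c = 0) /\
    a * h1 X + b * h2 X + c * h3 X = 0 /\
    a * h1 Y + b * h2 Y + c * h3 Y = 0 /\
    a * h1 Z + b * h2 Z + c * h3 Z = 0.

(* Main.v *)
Require Import Defs.
From Stdlib Require Import Reals Lra Lia Psatz.
Open Scope R_scope.

Definition det3 (x1 x2 x3 y1 y2 y3 z1 z2 z3 : R) :=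
  x1*(y2*z3-y3*z2) - x2*(y1*z3-y3*z1) + x3*(y1*z2-y2*z1).

Lemma ker_det x1 x2 x3 y1 y2 y3 z1 z2 z3 (hx : ~(x1=0/\x2=0/\x3=0)) :
 (exists a b c, ~(a=0/\b=0/\c=0) /\ a*x1+b*x2+c*x3=0 /\ a*y1+b*y2+c*y3=0 /\ a*z1+b*z2+c*z3=0)
 <-> det3 x1 x2 x3 y1 y2 y3 z1 z2 z3 = 0.
Proof.
  unfold det3; split.
  - intros [a [b [c [hn [ex [ey ez]]]]]].
    destruct (Req_dec (x1*(y2*z3-y3*z2) - x2*(y1*z3-y3*z1) + x3*(y1*z2-y2*z1)) 0) as [h|h]; auto.
    exfalso; apply hn.
    set (d := x1*(y2*z3-y3*z2) - x2*(y1*z3-y3*z1) + x3*(y1*z2-y2*z1)) in *.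
    assert (Ha : d*a = (y2*z3-y3*z2)*(a*x1+b*x2+c*x3) - (x2*z3-x3*z2)*(a*y1+b*y2+c*y3) + (x2*y3-x3*y2)*(a*z1+b*z2+c*z3)) by (unfold d; ring).
    assert (Hb : d*b = -(y1*z3-y3*z1)*(a*x1+b*x2+c*x3) + (x1*z3-x3*z1)*(a*y1+b*y2+c*y3) - (x1*y3-x3*y1)*(a*z1+b*z2+c*z3)) by (unfold d; ring).
    assert (Hc : d*c = (y1*z2-y2*z1)*(a*x1+b*x2+c*x3) - (x1*z2-x2*z1)*(a*y1+b*y2+c*y3) + (x1*y2-x2*y1)*(a*z1+b*z2+c*z3)) by (unfold d; ring).
    rewrite ex, ey, ez in Ha, Hb, Hc.
    repeat split.
    + destruct (Rmult_integral d a) as [H|H]; [lra|contradiction|exact H].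
    + destruct (Rmult_integral d b) as [H|H]; [lra|contradiction|exact H].
    + destruct (Rmult_integral d c) as [H|H]; [lra|contradiction|exact H].
  - intro hd.
    destruct (Req_dec (x2*y3-x3*y2) 0) as [c1|c1];
    [destruct (Req_dec (x3*y1-x1*y3) 0) as [c2|c2];
     [destruct (Req_dec (x1*y2-x2*y1) 0) as [c3|c3]|]|].
    +
      destruct (Req_dec (x2*z3-x3*z2) 0) as [d1|d1];
      [destruct (Req_dec (x3*z1-x1*z3) 0) as [d2|d2];
       [destruct (Req_dec (x1*z2-x2*z1) 0) as [d3|d3]|]|].
      * destruct (Req_dec x1 0) as [e1|e1].
        -- destruct (Req_dec x2 0) as [e2|e2].
           ++ assert (x3 <> 0) by tauto.
              exists x3, 0, (-x1). split; [intros [K _]; contradiction|].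
              repeat split; nra.
           ++ exists x2, (-x1), 0. split; [intros [K _]; contradiction|].
              repeat split; nra.
        -- exists x2, (-x1), 0. split; [intros [_ [K _]]; lra|].
           repeat split; nra.
      * exists (x2*z3-x3*z2), (x3*z1-x1*z3), (x1*z2-x2*z1).
        split; [intros [_ [_ H]]; contradiction|]. repeat split; nra.
      * exists (x2*z3-x3*z2), (x3*z1-x1*z3), (x1*z2-x2*z1).
        split; [intros [_ [K _]]; contradiction|]. repeat split; nra.
      * exists (x2*z3-x3*z2), (x3*z1-x1*z3), (x1*z2-x2*z1).
        split; [intros [K _]; contradiction|]. repeat split; nra.
    + exists (x2*y3-x3*y2), (x3*y1-x1*y3), (x1*y2-x2*y1).
      split; [intros [_ [_ H]]; contradiction|]. repeat split; nra.
    + exists (x2*y3-x3*y2), (x3*y1-x1*y3), (x1*y2-x2*y1).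
      split; [intros [_ [K _]]; contradiction|]. repeat split; nra.
    + exists (x2*y3-x3*y2), (x3*y1-x1*y3), (x1*y2-x2*y1).
      split; [intros [K _]; contradiction|]. repeat split; nra.
Qed.
Definition D3 (P Q S : pt) := (px Q - px P)*(py S - py P) - (py Q - py P)*(px S - px P).

Lemma cevian (P1 P2 P3 M N : pt) (X : hpt) (u v : R)
 (hD : D3 P1 P2 P3 <> 0) (hu : u <> 0) (hv : v <> 1)
 (hM : M = (px P3 + u*(px P1 - px P3), py P3 + u*(py P1 - py P3)))
 (hN : N = (px P1 + v*(px P2 - px P1), py P1 + v*(py P2 - py P1)))
 (hX0 : hnonzero X) (g1 : hon_line X P2 M) (g2 : hon_line X P3 N) :
 exists k, k <> 0 /\
   h1 X = k*(px P1 + v/(1-v)*px P2 + (1-u)/u*px P3) /\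
   h2 X = k*(py P1 + v/(1-v)*py P2 + (1-u)/u*py P3) /\
   h3 X = k*(1 + v/(1-v) + (1-u)/u).
Proof.
  subst M N.
  destruct g1 as [s1 [t1 [e1 [e2 e3]]]]. destruct g2 as [s2 [t2 [f1 [f2 f3]]]].
  destruct X as [[x1 x2] x3]. destruct P1 as [p1x p1y]. destruct P2 as [p2x p2y].
  destruct P3 as [p3x p3y].
  unfold hnonzero, D3, lift, h1, h2, h3, px, py in *; simpl in *.
  set (d1 := t1*u - t2*(1-v)). set (d2 := s1 - t2*v). set (d3 := t1*(1-u) - s2).
  assert (E1 : d1*p1x + d2*p2x + d3*p3x = 0) by (unfold d1, d2, d3; nra).
  assert (E2 : d1*p1y + d2*p2y + d3*p3y = 0) by (unfold d1, d2, d3; nra).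
  assert (E3 : d1 + d2 + d3 = 0) by (unfold d1, d2, d3; nra).
  set (D := (p2x - p1x) * (p3y - p1y) - (p2y - p1y) * (p3x - p1x)) in *.
  assert (H1 : D*d1 = (p2y-p3y)*(d1*p1x + d2*p2x + d3*p3x) + (p3x-p2x)*(d1*p1y + d2*p2y + d3*p3y) + (p2x*p3y - p3x*p2y)*(d1+d2+d3)) by (unfold D; ring).
  assert (H2 : D*d2 = (p3y-p1y)*(d1*p1x + d2*p2x + d3*p3x) + (p1x-p3x)*(d1*p1y + d2*p2y + d3*p3y) + (p3x*p1y - p1x*p3y)*(d1+d2+d3)) by (unfold D; ring).
  rewrite E1, E2, E3 in H1, H2.
  assert (z1 : d1 = 0) by (destruct (Rmult_integral D d1); [lra|contradiction|auto]).
  assert (z2 : d2 = 0) by (destruct (Rmult_integral D d2); [lra|contradiction|auto]).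
  assert (z3 : d3 = 0) by lra.
  unfold d1, d2, d3 in z1, z2, z3.
  assert (hv' : 1 - v <> 0) by lra.
  assert (ht2 : t2 = t1*u/(1-v)) by (field_simplify_eq; lra || (field; auto) || nra).
  assert (hs1 : s1 = t1*u*v/(1-v)) by (rewrite <- ht2 || idtac; rewrite ht2 in z2; lra).
  assert (hs2 : s2 = t1*(1-u)) by lra.
  assert (hk : t1*u <> 0).
  { intro hz. apply hX0.
    assert (t1 = 0) by (destruct (Rmult_integral t1 u); auto; contradiction).
    subst t1. rewrite hs1 in e1, e2, e3. rewrite e1, e2, e3. repeat split; field; auto. }
  exists (t1*u). split; [exact hk|].
  rewrite e1, e2, e3, hs1. repeat split; field; auto.
Qed.

Lemma sratio_eq d P X Q t : dot (vsub Q P) d <> 0 -> t <> 1 ->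
  X = (px P + t*(px Q - px P), py P + t*(py Q - py P)) -> sratio d P X Q = t/(1-t).
Proof.
  intros hk ht hX. subst X.
  destruct d as [d1 d2]. destruct P as [p1 p2]. destruct Q as [q1 q2].
  unfold sratio, slen, dot, vsub, px, py in *; simpl in *.
  assert (hpos : 0 < d1*d1 + d2*d2).
  { destruct (Req_dec d1 0); destruct (Req_dec d2 0); subst; [exfalso; apply hk; ring | nra | nra | nra]. }
  assert (hs : sqrt (d1*d1+d2*d2) <> 0) by (apply Rgt_not_eq, sqrt_lt_R0; lra).
  assert (h1t : 1 - t <> 0) by lra.
  set (k := (q1 - p1) * d1 + (q2 - p2) * d2) in *.
  replace ((p1 + t * (q1 - p1) - p1) * d1 + (p2 + t * (q2 - p2) - p2) * d2) with (t*k) by (unfold k; ring).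
  replace ((q1 - (p1 + t * (q1 - p1))) * d1 + (q2 - (p2 + t * (q2 - p2))) * d2) with ((1-t)*k) by (unfold k; ring).
  field; repeat split; auto.
Qed.

Lemma sumsq0 a b : a*a + b*b = 0 -> a = 0 /\ b = 0.
Proof.
  intro H. pose proof (Rle_0_sqr a). pose proof (Rle_0_sqr b). unfold Rsqr in *.
  assert (a*a = 0) by lra. assert (b*b = 0) by lra.
  split; [destruct (Rmult_integral a a)|destruct (Rmult_integral b b)]; auto.
Qed.

Theorem theorem3 (A B C Ap Am Bp Bm Cp Cm : pt)
  (hABC : ~ collinear A B C)
  (hAp : on_line Ap B C) (hAm : on_line Am B C)
  (hBp : on_line Bp C A) (hBm : on_line Bm C A)
  (hCp : on_line Cp A B) (hCm : on_line Cm A B)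
  (nAp : Ap <> C) (nAm : Am <> B) (nBp : Bp <> A) (nBm : Bm <> C)
  (nCp : Cp <> B) (nCm : Cm <> A)
  (X Y Z : hpt) (hX0 : hnonzero X) (hY0 : hnonzero Y) (hZ0 : hnonzero Z)
  (hX1 : hon_line X B Bm) (hX2 : hon_line X C Cp)
  (hY1 : hon_line Y C Cm) (hY2 : hon_line Y A Ap)
  (hZ1 : hon_line Z A Am) (hZ2 : hon_line Z B Bp) :
  let dAB := vsub B A in let dBC := vsub C B in let dCA := vsub A C in
  let ap := sratio dBC B Ap C in
  let bp := sratio dCA C Bp A in
  let cp := sratio dAB A Cp B in
  let am := sratio dBC C Am B in
  let bm := sratio dCA A Bm C in
  let cm := sratio dAB B Cm A in
  hcollinear X Y Z <->
  ap * bp * cp + am * bm * cm = -1 + ap * am + bp * bm + cp * cm.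
Proof.
  intros dAB dBC dCA ap bp cp am bm cm.
  destruct hAp as [x hAp]. destruct hAm as [y hAm]. destruct hBp as [z hBp].
  destruct hBm as [u hBm]. destruct hCp as [v hCp]. destruct hCm as [w hCm].
  assert (hD : D3 A B C <> 0) by exact hABC.
  assert (hD2 : D3 B C A <> 0) by (replace (D3 B C A) with (D3 A B C) by (unfold D3; ring); exact hD).
  assert (hD3 : D3 C A B <> 0) by (replace (D3 C A B) with (D3 A B C) by (unfold D3; ring); exact hD).
  destruct A as [a1 a2]; destruct B as [b1 b2]; destruct C as [c1 c2].
  unfold px, py in *; simpl in *.
  assert (nx : x <> 1) by (intro; subst; apply nAp; f_equal; ring).
  assert (ny : y <> 0) by (intro; subst; apply nAm; f_equal; ring).
  assert (nz : z <> 1) by (intro; subst; apply nBp; f_equal; ring).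
  assert (nu : u <> 0) by (intro; subst; apply nBm; f_equal; ring).
  assert (nv : v <> 1) by (intro; subst; apply nCp; f_equal; ring).
  assert (nw : w <> 0) by (intro; subst; apply nCm; f_equal; ring).
  unfold D3, px, py in hD; simpl in hD.
  assert (nBC : (c1-b1)*(c1-b1) + (c2-b2)*(c2-b2) <> 0).
  { intro H. apply hD. destruct (sumsq0 _ _ H).
    replace c1 with b1 by lra. replace c2 with b2 by lra. ring. }
  assert (nCA : (a1-c1)*(a1-c1) + (a2-c2)*(a2-c2) <> 0).
  { intro H. apply hD. destruct (sumsq0 _ _ H).
    replace c1 with a1 by lra. replace c2 with a2 by lra. ring. }
  assert (nAB : (b1-a1)*(b1-a1) + (b2-a2)*(b2-a2) <> 0).
  { intro H. apply hD. destruct (sumsq0 _ _ H).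
    replace b1 with a1 by lra. replace b2 with a2 by lra. ring. }
  assert (Eap : ap = x/(1-x)).
  { apply sratio_eq; [ | exact nx | exact hAp ]. unfold dot, vsub, dBC, px, py; simpl. intro H; apply nBC; lra. }
  assert (Eam : am = (1-y)/(1-(1-y))).
  { apply sratio_eq; [| lra |].
    - unfold dot, vsub, dBC, px, py; simpl. intro H; apply nBC; lra.
    - rewrite hAm; unfold px, py; simpl; f_equal; ring. }
  assert (Ebp : bp = z/(1-z)).
  { apply sratio_eq; [ | exact nz | exact hBp ]. unfold dot, vsub, dCA, px, py; simpl. intro H; apply nCA; lra. }
  assert (Ebm : bm = (1-u)/(1-(1-u))).
  { apply sratio_eq; [| lra |].
    - unfold dot, vsub, dCA, px, py; simpl. intro H; apply nCA; lra.
    - rewrite hBm; unfold px, py; simpl; f_equal; ring. }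
  assert (Ecp : cp = v/(1-v)).
  { apply sratio_eq; [ | exact nv | exact hCp ]. unfold dot, vsub, dAB, px, py; simpl. intro H; apply nAB; lra. }
  assert (Ecm : cm = (1-w)/(1-(1-w))).
  { apply sratio_eq; [| lra |].
    - unfold dot, vsub, dAB, px, py; simpl. intro H; apply nAB; lra.
    - rewrite hCm; unfold px, py; simpl; f_equal; ring. }
  replace (1-(1-y)) with y in Eam by ring.
  replace (1-(1-u)) with u in Ebm by ring.
  replace (1-(1-w)) with w in Ecm by ring.
  destruct (cevian (a1,a2) (b1,b2) (c1,c2) Bm Cp X u v hD nu nv hBm hCp hX0 hX1 hX2)
    as [kX [nkX [X1 [X2 X3]]]].
  destruct (cevian (b1,b2) (c1,c2) (a1,a2) Cm Ap Y w x hD2 nw nx hCm hAp hY0 hY1 hY2)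
    as [kY [nkY [Y1 [Y2 Y3]]]].
  destruct (cevian (c1,c2) (a1,a2) (b1,b2) Am Bp Z y z hD3 ny nz hAm hBp hZ0 hZ1 hZ2)
    as [kZ [nkZ [Z1 [Z2 Z3]]]].
  unfold px, py in X1, X2, Y1, Y2, Z1, Z2; simpl in X1, X2, Y1, Y2, Z1, Z2.
  rewrite <- Eap, <- Eam, <- Ebp, <- Ebm, <- Ecp, <- Ecm in *.
  clearbody ap am bp bm cp cm.
  unfold hcollinear.
  destruct X as [[X1' X2'] X3']. destruct Y as [[Y1' Y2'] Y3']. destruct Z as [[Z1' Z2'] Z3'].
  unfold h1, h2, h3 in *; simpl in *.
  rewrite (ker_det _ _ _ _ _ _ _ _ _ hX0).
  rewrite X1, X2, X3, Y1, Y2, Y3, Z1, Z2, Z3.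
  set (L := (b1 - a1) * (c2 - a2) - (b2 - a2) * (c1 - a1)) in *.
  set (Mt := 1 - ap*am - cp*cm - bp*bm + ap*bp*cp + am*bm*cm).
  assert (E : det3 (kX * (a1 + cp * b1 + bm * c1)) (kX * (a2 + cp * b2 + bm * c2)) (kX * (1 + cp + bm))
     (kY * (b1 + ap * c1 + cm * a1)) (kY * (b2 + ap * c2 + cm * a2)) (kY * (1 + ap + cm))
     (kZ * (c1 + bp * a1 + am * b1)) (kZ * (c2 + bp * a2 + am * b2)) (kZ * (1 + bp + am))
     = kX*kY*kZ*L*Mt) by (unfold det3, L, Mt; ring).
  unfold h1, h2, h3; simpl. rewrite E. split.
  - intro H. assert (Mt = 0).
    { destruct (Rmult_integral _ _ H) as [H'|H']; auto.
      exfalso. repeat (destruct (Rmult_integral _ _ H') as [H''|H'']; clear H'; rename H'' into H'); try contradiction.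
      all: fail. }
    unfold Mt in *; lra.
  - intro H. assert (Mt = 0) by (unfold Mt; lra). rewrite H0; ring.
Qed.
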